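(* Let $G$ be a finite nonabelian group with $Z(G)\neq 1$ and $G\in\mathcal{D}_n$. Then one of the following holds: (1) $Z(G)\in\mathcal{D}_{n-k}$ for some integer $k\ge 4$; (2) $G=KH$ where $K\trianglelefteq G$ has prime order $p$, $H$ is a cyclic subgroup of order $q^2$ for a prime $q$ dividing $p-1$, and $C_H(K)=Z(G)$ has order $q$; in this case $G\in\mathcal{D}_3$ and $Z(G)\in\mathcal{D}_0$.
   Context: $\mathcal{D}(X)$ denotes the number of conjugacy classes of nontrivial subgroups $Y$ of the finite group $X$ with $N_X(Y)\neq Y$; $\mathcal{D}_n$ is the family of finite groups $X$ with $\mathcal{D}(X)=n$. $Z(G)$ is the center of $G$. *)

(* Defs.v *)
From mathcomp Require Import all_boot all_fingroup all_solvable.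
Set Implicit Arguments. Unset Strict Implicit. Unset Printing Implicit Defensive.
Local Open Scope group_scope.

Definition nonselfnorm_subgroups (gT : finGroupType) (X : {set gT}) : {set {set gT}} :=
  [set Y : {set gT} | [&& group_set Y, Y \subset X, Y != 1 & 'N_X(Y) != Y]].

Definition Dnum (gT : finGroupType) (X : {set gT}) : nat :=
  #|[set Y :^: X | Y in nonselfnorm_subgroups X]|.

(* Main.v *)
Require Import Defs.
From mathcomp Require Import all_boot all_fingroup all_solvable.
From mathcomp Require integral_char vcharacter.
Set Implicit Arguments. Unset Strict Implicit. Unset Printing Implicit Defensive.
Local Open Scope group_scope.


Definition Sig (gT : finGroupType) (G : {group gT}) : {set {set gT}} :=
  [set Y in nonselfnorm_subgroups G | ~~ (Y \subset 'Z(G))].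
Definition cnum (gT : finGroupType) (G : {group gT}) : nat :=
  #|[set Y :^: G | Y in Sig G]|.

Lemma mem_nsn (gT : finGroupType) (X H : {group gT}) :
  (gval H \in nonselfnorm_subgroups X) = [&& H \subset X, H :!=: 1 & 'N_X(H) != H].
Proof. by rewrite inE groupP. Qed.

Lemma mem_Sig (gT : finGroupType) (G H : {group gT}) :
  (gval H \in Sig G) = [&& H \subset G, ~~ (H \subset 'Z(G)) & 'N_G(H) != H].
Proof.
rewrite inE mem_nsn; case: (boolP (H \subset 'Z(G))) => nZ; first by rewrite !andbF.
have ->: (H :!=: 1) = true by apply/eqP => H1; move: nZ; rewrite H1 sub1G.
by rewrite andbT.
Qed.

Lemma Sig_proper (gT : finGroupType) (G H : {group gT}) :
  H \subset G -> ~~ (H \subset 'Z(G)) -> H \proper 'N_G(H) -> gval H \in Sig G.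
Proof.
move=> sHG nZ pr; rewrite mem_Sig sHG nZ /=.
by apply/eqP=> E; rewrite E properE subxx in pr.
Qed.

Lemma Sig_normal (gT : finGroupType) (G H : {group gT}) :
  H <| G -> H :!=: G -> ~~ (H \subset 'Z(G)) -> gval H \in Sig G.
Proof.
case/andP=> sHG nHG neq nZ; rewrite mem_Sig sHG nZ /=.
by rewrite (setIidPl nHG) eq_sym.
Qed.

Lemma Z_norm (gT : finGroupType) (G H : {group gT}) :
  H \subset G -> 'Z(G) \subset 'N_G(H).
Proof.
move=> sHG; rewrite subsetI center_sub /=.
apply: subset_trans (cent_sub H); rewrite centsC.
by apply: subset_trans sHG _; rewrite centsC subsetIr.
Qed.

Lemma Sig_Zfree (gT : finGroupType) (G H : {group gT}) :
  H \subset G -> ~~ (H \subset 'Z(G)) -> ~~ ('Z(G) \subset H) -> gval H \in Sig G.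
Proof.
move=> sHG nZ nZ2; rewrite mem_Sig sHG nZ /=.
by apply/eqP=> E; move: (Z_norm sHG); rewrite E; apply/negP.
Qed.

Lemma Sig_nil (gT : finGroupType) (G H R : {group gT}) :
  H \proper R -> R \subset G -> nilpotent R -> ~~ (H \subset 'Z(G)) ->
  gval H \in Sig G.
Proof.
move=> pHR sRG nilR nZ; have sHG := subset_trans (proper_sub pHR) sRG.
apply: Sig_proper => //; have := nilpotent_proper_norm nilR pHR.
move/proper_sub_trans; apply; exact: setSI.
Qed.

Lemma cnum_le2 (gT : finGroupType) (G : {group gT}) Y1 Y2 Y3 :
  cnum G <= 2 -> Y1 \in Sig G -> Y2 \in Sig G -> Y3 \in Sig G ->
  [|| Y1 :^: G == Y2 :^: G, Y1 :^: G == Y3 :^: G | Y2 :^: G == Y3 :^: G].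
Proof.
move=> le2 S1 S2 S3; apply: contraLR le2; rewrite !negb_or => /and3P[n12 n13 n23].
rewrite -ltnNge /cnum; apply: leq_trans (subset_leq_card (_ : 
   Y1 :^: G |: [set Y2 :^: G; Y3 :^: G] \subset _)).
  by rewrite cardsU1 cards2 !inE negb_or n12 n13 n23.
by apply/subsetP=> X; rewrite !inE => /or3P[] /eqP->; apply: imset_f.
Qed.

Lemma orbit_card (gT : finGroupType) (G : {group gT}) (Y1 Y2 : {set gT}) :
  Y1 :^: G = Y2 :^: G -> #|Y1| = #|Y2|.
Proof.
move=> E; have: Y2 \in Y1 :^: G by rewrite E -{1}(conjsg1 Y2) imset_f.
by case/imsetP=> x _ ->; rewrite cardJg.
Qed.

Lemma orbit_normal (gT : finGroupType) (G H : {group gT}) (Y : {set gT}) :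
  H <| G -> gval H :^: G = Y :^: G -> Y = H.
Proof.
move=> /andP[_ nHG] E; have: Y \in gval H :^: G by rewrite E -{1}(conjsg1 Y) imset_f.
by case/imsetP=> x Gx ->; apply: (normsP nHG).
Qed.


Lemma orbit_central (gT : finGroupType) (X : {group gT}) (Y : {set gT}) :
  X \subset 'N(Y) -> Y :^: X = [set Y].
Proof.
move=> nYX; apply/setP=> W; rewrite inE; apply/imsetP/eqP => [[x Xx ->]|->].
  exact: (normsP nYX).
by exists 1; rewrite ?group1 ?conjsg1.
Qed.

Lemma Dnum_decomp (gT : finGroupType) (G : {group gT}) :
  'Z(G) :!=: G -> 'Z(G) :!=: 1 -> Dnum G = Dnum 'Z(G) + 1 + cnum G.
Proof.
move=> nZG ntZ; set Z := 'Z(G).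
set A := nonselfnorm_subgroups Z.
have nYsub (Y : {set gT}) : Y \subset Z -> G \subset 'N(Y).
  move=> sYZ; apply: subset_trans (cent_sub Y); rewrite centsC.
  by apply: subset_trans sYZ _; rewrite subsetIr.
have nYsubZ (Y : {set gT}) : Y \subset Z -> Z \subset 'N(Y).
  by move=> sYZ; apply: subset_trans (nYsub Y sYZ); apply: center_sub.
have decomp : nonselfnorm_subgroups G = A :|: [set gval Z] :|: Sig G.
  apply/setP=> Y; rewrite !inE.
  case: (boolP (Y \subset Z)) => sYZ; last first.
    rewrite /= andbF /= andbT.
    by have -> : (Y == Z) = false by apply: contraNF sYZ => /eqP->.
  rewrite andbF orbF (setIidPl (nYsub Y sYZ)) (setIidPl (nYsubZ Y sYZ)).
  rewrite (subset_trans sYZ (center_sub G)) /=.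
  case: (Y =P Z) => [->|neYZ]; first by rewrite groupP ntZ eq_sym nZG orbT.
  rewrite orbF.
  have -> : ((G : {set gT}) != Y) = true.
    apply/eqP=> E; rewrite -E in sYZ; move/negP: nZG; apply.
    by rewrite eqEsubset center_sub sYZ.
  by have -> : (Z != Y) = true by rewrite eq_sym; apply/eqP.
have orbA : {in A, forall Y, Y :^: G = [set Y]}.
  by move=> Y; rewrite inE => /and4P[_ sYZ _ _]; apply: orbit_central; apply: nYsub.
have DZ : Dnum Z = #|[set Y :^: G | Y in A]|.
  rewrite /Dnum -/A; suff -> : [set Y :^: Z | Y in A] = [set Y :^: G | Y in A] by [].
  apply/setP=> W.
  have oZ Y : Y \in A -> Y :^: Z = [set Y].
    by rewrite inE => /and4P[_ sYZ _ _]; apply: orbit_central; apply: nYsubZ.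
  by apply/imsetP/imsetP => -[Y YA ->]; exists Y => //; rewrite oZ // orbA.
rewrite /Dnum decomp !imsetU imset_set1 -/(Dnum Z) DZ /cnum.
have orbZ : gval Z :^: G = [set gval Z] by apply: orbit_central; apply: nYsub.
have nSig (W : {set {set gT}}) : W \in [set Y :^: G | Y in Sig G] -> forall Y : {set gT}, Y \subset Z -> W != [set Y].
  case/imsetP=> Y' SY' -> Y sYZ; apply/eqP => E.
  have : Y' \in Y' :^: G by rewrite -{1}(conjsg1 Y') imset_f.
  rewrite E inE => /eqP EY; move: SY'; rewrite inE EY sYZ andbF.
  by [].
rewrite cardsU (_ : _ :&: _ = set0) ?cards0 ?subn0; last first.
  apply/setP=> W; rewrite !inE; apply/negP=> /andP[/orP[/imsetP[Y YA ->]|/eqP->] WS].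
    rewrite orbA // in WS; move: YA; rewrite inE => /and4P[_ sYZ _ _].
    by move: (nSig _ WS Y sYZ); rewrite eqxx.
  by rewrite orbZ in WS; move: (nSig _ WS Z (subxx _)); rewrite eqxx.
rewrite setUC cardsU1 orbZ.
suff -> : [set Z] \notin [set Y :^: G | Y in A] by rewrite /= (addnC 1%N).
apply/imsetP=> [[Y YA E]]; rewrite orbA // in E.
have EY : Y = Z by apply/set1P; rewrite E set11.
by move: YA; rewrite EY inE (setIidPl (nYsubZ _ (subxx _))) eqxx !andbF.
Qed.


Lemma union2_proper (gT : finGroupType) (G H1 H2 : {group gT}) :
  H1 \proper G -> H2 \proper G -> exists2 g, g \in G & (g \notin H1) && (g \notin H2).
Proof.
move=> /properP[_ [a Ga aH1]] /properP[_ [b Gb bH2]].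
case: (boolP (a \in H2)) => aH2; last by exists a => //; rewrite aH1.
case: (boolP (b \in H1)) => bH1; last by exists b => //; rewrite bH1.
exists (a * b); first by rewrite groupM.
by rewrite groupMr // aH1 groupMl.
Qed.

Lemma max_normal_Sig (gT : finGroupType) (G M : {group gT}) :
  ~~ abelian G -> nilpotent G -> maxgroup M (fun H : {group gT} => H \proper G) ->
  M <| G /\ gval M \in Sig G.
Proof.
move=> nabG nilG maxM; have prM : M \proper G := maxgroupp maxM.
have maxP : forall H : {group gT}, H \proper G -> M \subset H -> H :=: M.
  by case/maxgroupP: maxM => _ mx H prH sMH; apply: mx.
have nMG : M <| G.
  rewrite /normal (proper_sub prM) /=.
  have pN := nilpotent_proper_norm nilG prM.
  case: (boolP ('N_G(M) \proper G)) => prN.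
    by have E := maxP _ prN (proper_sub pN); rewrite E properE subxx in pN.
  have : 'N_G(M) = G.
    by apply/eqP; rewrite eqEproper subsetIl /= (negbTE prN).
  by move=> E; rewrite -E subsetIr.
split=> //; apply: Sig_normal => //; first by rewrite proper_neq.
apply/negP=> sMZ.
have prZ : 'Z(G) \proper G.
  by rewrite properEneq center_sub andbT; apply: contra nabG => /eqP <-; apply: center_abelian.
have EZ : 'Z(G) = M :> {set gT}.
  by have E := maxP _ prZ sMZ; rewrite E.
have [g Gg gM] : exists2 g, g \in G & g \notin M by case/properP: prM => _ [g] *; exists g.
have abJ : abelian ('Z(G) <*> <[g]>).
  rewrite abelianY center_abelian cycle_abelian /= cycle_subG.
  by apply: (subsetP _ g Gg); rewrite centsC subsetIr.
have sJG : 'Z(G) <*> <[g]> \subset G by rewrite join_subG center_sub cycle_subG.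
have prJ : ('Z(G) <*> <[g]>)%G \proper G.
  by rewrite properEneq sJG andbT; apply: contra nabG => /eqP E; rewrite -E.
have E := maxP _ prJ; rewrite -EZ joing_subl in E.
by case/negP: gM; rewrite -EZ -(E isT) mem_gen // inE cycle_id orbT.
Qed.

Lemma nil_c3 (gT : finGroupType) (G : {group gT}) :
  ~~ abelian G -> nilpotent G -> cnum G <= 2 -> False.
Proof.
move=> nabG nilG c2.
have ncyc : ~~ cyclic G by apply: contra nabG; apply: cyclic_abelian.
have pr1 : (1%G : {group gT}) \proper G.
  by rewrite proper1G; apply: contra nabG => /eqP->; apply: abelian1.
have [M1 maxM1 _] := @maxgroup_exists _ (fun H : {group gT} => H \proper G) _ pr1.
have prM1 : M1 \proper G := maxgroupp maxM1.
have [g1 Gg1 g1M1] : exists2 g, g \in G & g \notin M1 by case/properP: prM1 => _ [g] *; exists g.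
have prc (g : gT) : g \in G -> <[g]>%G \proper G.
  move=> Gg; rewrite properEneq cycle_subG Gg andbT.
  by apply: contra ncyc => /eqP <-; apply: cycle_cyclic.
have [M2 maxM2 sg1M2] := @maxgroup_exists _ (fun H : {group gT} => H \proper G) _ (prc g1 Gg1).
have prM2 : M2 \proper G := maxgroupp maxM2.
have [g2 Gg2 /andP[g2M1 g2M2]] := union2_proper prM1 prM2.
have [M3 maxM3 sg2M3] := @maxgroup_exists _ (fun H : {group gT} => H \proper G) _ (prc g2 Gg2).
have [n1 S1] := max_normal_Sig nabG nilG maxM1.
have [n2 S2] := max_normal_Sig nabG nilG maxM2.
have [n3 S3] := max_normal_Sig nabG nilG maxM3.
rewrite cycle_subG in sg1M2 sg2M3.
have := cnum_le2 c2 S1 S2 S3.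
case/or3P=> /eqP E.
- by have E' := orbit_normal n1 E; rewrite -E' sg1M2 in g1M1.
- by have E' := orbit_normal n1 E; rewrite -E' (subsetP sg2M3) ?cycle_id in g2M1.
- by have E' := orbit_normal n2 E; rewrite -E' (subsetP sg2M3) ?cycle_id in g2M2.
Qed.


Lemma memQ (gT : finGroupType) (Z X : {group gT}) (x : gT) :
  Z <| X -> x \in 'N(Z) -> (coset Z x \in X / Z) = (x \in X).
Proof.
move=> nsZX Nx; have := quotientGK nsZX; move/setP/(_ x).
by rewrite morphpreE in_setI Nx inE.
Qed.

Lemma FL (gT : finGroupType) (G X : {group gT}) :
  'Z(G) \subset X -> X \subset G -> X :!=: G -> 'Z(G) :!=: X ->
  'N_G(X) = X ->
  (forall g, g \in G -> g \notin X -> X :&: X :^ g \subset 'Z(G)) ->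
  exists N : {group gT}, [/\ N <| G, N :&: X = 'Z(G) & N * X = G].
Proof.
move=> sZX sXG nXG nZX nNX TI.
have nsZG : 'Z(G) <| G := center_normal G.
have nZG : G \subset 'N('Z(G)) := normal_norm nsZG.
have nsZX : 'Z(G) <| X by rewrite /normal sZX (subset_trans sXG nZG).
have frob : [Frobenius (G / 'Z(G)) with complement (X / 'Z(G))].
  apply/andP; split.
    by apply: contra nXG => /eqP E; rewrite (quotient_inj nsZX nsZG E).
  apply/normedTI_memJ_P; split.
  - rewrite setD_eq0 quotient_sub1 ?(subset_trans sXG nZG) //.
    apply/negP=> sXZ; case/negP: nZX; rewrite eqEsubset sZX.
    by rewrite sXZ.
  - exact: quotientS.
  move=> ab gb; rewrite 2!inE => /andP[ab1 Xab] Ggb.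
  case/morphimP: Xab => a Na Xa Eab; case/morphimP: Ggb => g Ng Gg Egb.
  rewrite Eab Egb -morphJ // !inE.
  have h1 : (coset_morphism 'Z(G) (a ^ g) \in X / 'Z(G)) = (a ^ g \in X) :=
    memQ nsZX (groupJ Na Ng).
  have h2 : (coset_morphism 'Z(G) g \in (X / 'Z(G))%G) = (g \in X) := memQ nsZX Ng.
  rewrite h1 h2.
  have -> : (coset_morphism 'Z(G) (a ^ g) != 1) = true.
    apply/negP=> /eqP E1; move/eqP: ab1; apply; rewrite Eab.
    have aZ : a \in 'Z(G).
      have : a ^ g \in 'Z(G) by apply: coset_idr; rewrite ?groupJ.
      by rewrite memJ_norm // (subsetP nZG).
    exact: coset_id aZ.
  rewrite /=; case: (boolP (g \in X)) => gX; first by rewrite groupJ.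
  apply/negP=> Xag.
  have : a ^ g \in X :&: X :^ g by rewrite inE Xag memJ_conjg.
  move/(subsetP (TI g Gg gX)); rewrite memJ_norm ?(subsetP nZG) // => aZ.
  by move/eqP: ab1; apply; rewrite Eab; exact: coset_id aZ.
have [Kb] := vcharacter.Frobenius_kernel_exists frob.
case/andP=> /eqP defG _.
have [nsKG _ defKX _ tiKX] := sdprod_context defG.
have [N defN] : exists N : {group gT}, gval N = coset 'Z(G) @*^-1 Kb by exists [group of coset 'Z(G) @*^-1 Kb].
exists N; rewrite defN; split.
- by rewrite -[X in _ <| X](quotientGK nsZG) cosetpre_normal.
- by rewrite /= -(quotientGK nsZX) -morphpreI tiKX; exact: ker_coset.
- by rewrite /= -(quotientGK nsZX) -cosetpreM defKX quotientGK.
Qed.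


Lemma caseA (gT : finGroupType) (G P : {group gT}) (s : nat) :
  ~~ abelian G -> 'Z(G) :!=: 1 -> cnum G <= 2 -> prime s ->
  s.-Sylow(G) P -> ~~ (P \subset 'Z(G)) ->
  (forall Y, Y \in Sig G -> ~~ s.-group Y) ->
  exists K : {group gT}, [/\ K <| G, prime #|K| & K :&: 'Z(G) = 1].
Proof.
move=> nabG ntZ c2 prs sylP nPZ noS.
have /and3P[sPG sP s'iP] := sylP.
have nNP : 'N_G(P) = P.
  apply/eqP; apply/negPn/negP => neq.
  have SP : gval P \in Sig G.
    by apply: Sig_proper => //; rewrite properEneq eq_sym neq subsetI sPG normG.
  by move: (noS _ SP); rewrite sP.
have sZP : 'Z(G) \subset P by rewrite -nNP Z_norm.
have genP x : x \in P -> x \notin 'Z(G) -> <[x]> = P :> {set gT}.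
  move=> Px xZ; apply/eqP; rewrite eqEproper cycle_subG Px /=.
  apply/negP => pr.
  have : gval <[x]>%G \in Sig G.
    apply: (Sig_nil pr sPG (pgroup_nil sP)).
    by rewrite cycle_subG.
  by move/noS; rewrite (pgroupS _ sP) // cycle_subG.
have TI g : g \in G -> g \notin P -> P :&: P :^ g \subset 'Z(G).
  move=> Gg gP; apply/subsetP=> x /setIP[Px Pgx]; apply/negPn/negP => xZ.
  have E : P :^ g = P.
    apply/eqP; rewrite eq_sym eqEcard cardJg leqnn andbT -{1}(genP x Px xZ).
    by rewrite cycle_subG.
  by case/negP: gP; rewrite -nNP inE Gg; apply/normP.
have nilG : ~~ nilpotent G.
  apply/negP=> nilG; exact: (nil_c3 nabG nilG c2).
have nPG : P :!=: G.
  by apply: contra nilG => /eqP E; rewrite -E; apply: pgroup_nil sP.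
have nZP : 'Z(G) :!=: P by apply: contraNneq nPZ => <-.
have [N [nsNG tiNP defG]] := FL sZP sPG nPG nZP nNP TI.
have sZN : 'Z(G) \subset N by rewrite -tiNP subsetIl.
have sNG : N \subset G := normal_sub nsNG.
have cardE : #|N : 'Z(G)| = #|G : P|.
  have h1 := Lagrange sZN; have h2 := Lagrange sPG.
  have h3 := mul_cardG N P; rewrite defG tiNP in h3.
  apply/eqP; rewrite -(eqn_pmul2l (cardG_gt0 'Z(G))) h1.
  rewrite -(eqn_pmul2r (cardG_gt0 P)) h3 -h2.
  by rewrite mulnC mulnA mulnAC.
have nNZ : N :!=: 'Z(G).
  apply/negP=> /eqP E; case/negP: nPG; rewrite -defG E mulSGid //.
have nNG : N :!=: G.
  apply/negP=> /eqP E; case/negP: nZP; rewrite -tiNP E (setIidPr sPG).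
  by [].
have sZp : s.-group 'Z(G) := pgroupS sZP sP.
have hallZ : Hall N 'Z(G).
  rewrite /Hall sZN /= cardE.
  exact: pnat_coprime sZp s'iP.
have nsZN : 'Z(G) <| N.
  by rewrite /normal sZN (subset_trans sNG) ?normal_norm ?center_normal.
have [M /complP[tiZM defN]] := splitsP (SchurZassenhaus_split hallZ nsZN).
have sMN : M \subset N by rewrite -defN mulG_subr.
have sMG : M \subset G := subset_trans sMN sNG.
have cardM : #|M| = #|G : P|.
  rewrite -cardE; have := Lagrange sZN; rewrite -{2}defN TI_cardMg //.
  by move/eqP; rewrite eqn_pmul2l ?cardG_gt0 // => /eqP ->.
have nsMN : M <| N.
  rewrite /normal sMN -defN mul_subG ?normG //.
  by apply: subset_trans (Z_norm sMG) _; apply: subsetIr.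
have hallM : s^'.-Hall(N) M.
  rewrite /pHall sMN /pgroup cardM s'iP /=.
  have : #|N : M| = #|'Z(G)|.
    by rewrite -(divgS sMN) -defN TI_cardMg // mulnK ?cardG_gt0.
  by move->; rewrite pnatNK.
have nsMG : M <| G.
  rewrite -(normal_Hall_pcore hallM nsMN).
  exact: char_normal_trans (pcore_char _ _) nsNG.
have ntM : M :!=: 1.
  apply/negP=> /eqP M1; case/negP: nNZ.
  by rewrite -defN M1 mulg1.
have tiMZ : M :&: 'Z(G) = 1 by rewrite setIC.
have nMZ : ~~ (M \subset 'Z(G)).
  by apply: contra ntM => sMZ; rewrite -tiMZ (setIidPl sMZ).
have SM : gval M \in Sig G.
  apply: Sig_normal => //; apply: contra nNG => /eqP E.
  by rewrite eqEsubset sNG -E sMN.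
have nNZ' : ~~ (N \subset 'Z(G)).
  by apply: contra nNZ => sNZ; rewrite eqEsubset sNZ sZN.
have SN : gval N \in Sig G by apply: Sig_normal.
have nMN : gval M != gval N.
  apply/eqP=> E; case/negP: ntZ; rewrite -subG1 -tiMZ subsetI subxx andbT E.
  by [].
have allM (Y : {group gT}) : Y \subset M -> Y :!=: 1 -> Y :=: M.
  move=> sYM ntY.
  have tiYZ : Y :&: 'Z(G) = 1.
    by apply/trivgP; rewrite -tiMZ setSI.
  have SY : gval Y \in Sig G.
    apply: Sig_Zfree; first exact: subset_trans sYM sMG.
      by apply: contra ntY => sYZ; rewrite -tiYZ (setIidPl sYZ).
    by apply: contra ntZ => sZY; rewrite -tiYZ (setIidPr sZY).
  case/or3P: (cnum_le2 c2 SY SM SN) => /eqP E.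
  - exact: orbit_normal nsMG (esym E).
  - have E' := orbit_normal nsNG (esym E).
    case/negP: ntZ; rewrite -subG1 -tiMZ subsetI subxx andbT.
    by apply: subset_trans sZN _; rewrite -E'.
  - by case/negP: nMN; rewrite (orbit_normal nsNG (esym E)).
exists M; split=> //.
have gt1 : 1 < #|M| by rewrite ltnNge -trivg_card_le1.
have [x Mx ox] := Cauchy (pdiv_prime gt1) (pdiv_dvd _).
have Ex : <[x]> :=: M.
  apply: allM; first by rewrite cycle_subG.
  by rewrite cycle_eq1 -order_eq1 ox; apply: contraTneq (pdiv_prime gt1) => ->.
by rewrite -Ex -orderE ox pdiv_prime.
Qed.


Lemma two_pnat (n s t : nat) : 1 < n -> s.-nat n -> t.-nat n -> s = t.
Proof.
move=> n1 sn tn; have pp : pdiv n \in \pi(n) by rewrite pi_pdiv.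
have := pnatPpi sn pp; have := pnatPpi tn pp; rewrite !inE => /eqP <- /eqP ->.
by [].
Qed.

Lemma Sig_gt1 (gT : finGroupType) (G H : {group gT}) :
  gval H \in Sig G -> 1 < #|H|.
Proof.
rewrite mem_Sig => /and3P[_ nZ _]; rewrite ltnNge -trivg_card_le1.
by apply: contra nZ => /eqP->; apply: sub1G.
Qed.

Lemma orbit_diff (gT : finGroupType) (G Y1 Y2 : {group gT}) (s t : nat) :
  gval Y1 \in Sig G -> s.-group Y1 -> t.-group Y2 -> s != t ->
  (gval Y1 :^: G == gval Y2 :^: G) = false.
Proof.
move=> S1 sY1 tY2 nst; apply/negP=> /eqP E.
have ec := orbit_card E; rewrite /pgroup ec in sY1.
by case/eqP: nst; apply: two_pnat sY1 tY2; rewrite -ec; apply: Sig_gt1 S1.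
Qed.

Lemma contraB (gT : finGroupType) (G L Y : {group gT}) (s t : nat) :
  cnum G <= 2 -> 'Z(G) :!=: 1 -> prime s -> prime t -> s != t -> t %| #|G| ->
  L <| G -> nilpotent L -> 'Z(G) \subset L -> ~~ (L \subset 'Z(G)) -> L :!=: G ->
  s.-group L -> gval Y \in Sig G -> t.-group Y -> False.
Proof.
move=> c2 ntZ ps pt nst tG nsLG nilL sZL nLZ nLG sL SY tY.
have sLG := normal_sub nsLG.
have SL : gval L \in Sig G by apply: Sig_normal.
have noprop (R : {group gT}) : R \proper L -> R \subset 'Z(G).
  move=> prRL; apply/negPn/negP => nRZ.
  have SR := Sig_nil prRL sLG nilL nRZ.
  have sR := pgroupS (proper_sub prRL) sL.
  case/or3P: (cnum_le2 c2 SR SL SY) => E.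
  - by have E' := orbit_normal nsLG (esym (eqP E)); rewrite E' properE subxx in prRL.
  - by rewrite (orbit_diff SR sR tY nst) in E.
  - by rewrite (orbit_diff SL sL tY nst) in E.
have [x Lx xZ] : exists2 x, x \in L & x \notin 'Z(G) by apply/subsetPn.
have abL : abelian L.
  have : <[x]> :=: L.
    apply/eqP; rewrite eqEproper cycle_subG Lx /=; apply/negP => pr.
    by case/negP: xZ; rewrite -cycle_subG; apply: noprop pr.
  by move <-; apply: cycle_abelian.
have [y Gy oy] := Cauchy pt tG.
have nLy : <[y]> \subset 'N(L) by rewrite cycle_subG (subsetP (normal_norm nsLG)).
have cop : coprime #|L| #|<[y]>|.
  rewrite -orderE oy; apply: (pnat_coprime sL); by rewrite pnatE // !inE eq_sym.
have TI := coprime_abel_cent_TI nLy cop abL.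
have sCL : [~: L, <[y]>] \subset L by rewrite commg_subl.
have cZy : 'Z(G) \subset 'C(<[y]>).
  by rewrite centsC cycle_subG; apply: (subsetP _ y Gy); rewrite centsC subsetIr.
have comm1 : [~: L, <[y]>] = 1.
  case: (eqVproper sCL) => [E | pr].
    rewrite E in TI; case/negP: ntZ; rewrite -subG1 -TI subsetI sZL.
    by [].
  by rewrite -TI; apply/esym/setIidPl; apply: subset_trans (noprop _ pr) cZy.
have yC : y \in 'C_G(L).
  rewrite inE Gy -cycle_subG centsC; exact/commG1P.
have nsCG : 'C_G(L) <| G.
  by have := subcent_normal G L; rewrite (setIidPl (normal_norm nsLG)).
have sLC : L \subset 'C_G(L) by rewrite subsetI sLG.
have nCG : 'C_G(L) :!=: G.
  apply/negP=> /eqP E; case/negP: nLZ; rewrite subsetI sLG centsC.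
  by rewrite -{1}E subsetIr.
have nCZ : ~~ ('C_G(L) \subset 'Z(G)).
  by apply: contra nLZ; apply: subset_trans sLC.
have SC := Sig_normal nsCG nCG nCZ.
case/or3P: (cnum_le2 c2 SC SL SY) => E.
- have E' := orbit_normal nsLG (esym (eqP E)).
  have tL : t %| #|L| by rewrite -oy order_dvdG // -E'.
  have := pnat_dvd tL sL; rewrite pnatE // inE => /eqP ets.
  by rewrite ets eqxx in nst.
- have ec := orbit_card (eqP E).
  have tC : t.-group 'C_G(L) by rewrite /pgroup ec.
  have tL := pgroupS sLC tC.
  by case/eqP: nst; apply: two_pnat sL tL; apply: Sig_gt1 SL.
- by rewrite (orbit_diff SL sL tY nst) in E.
Qed.

Lemma caseB (gT : finGroupType) (G : {group gT}) :
  ~~ abelian G -> 'Z(G) :!=: 1 -> cnum G <= 2 ->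
  (forall s, s \in primes #|G : 'Z(G)| ->
     exists Y : {group gT}, gval Y \in Sig G /\ s.-group Y) -> False.
Proof.
move=> nabG ntZ c2 wit.
have nilG : ~~ nilpotent G by apply/negP => nilG; apply: (nil_c3 nabG nilG c2).
have nZG : G \subset 'N('Z(G)) := normal_norm (center_normal G).
have GZ : ~~ (G \subset 'Z(G)).
  by apply: contra nabG => sGZ; apply: abelianS sGZ (center_abelian G).
have primeP s : s \in primes #|G : 'Z(G)| -> prime s /\ s %| #|G|.
  rewrite mem_primes => /and3P[ps _ sd]; split=> //.
  exact: dvdn_trans sd (dvdn_indexg _ _).
have uq := primes_uniq #|G : 'Z(G)|.
case E: (primes #|G : 'Z(G)|) uq => [|s1 [|s2 [|s3 rest]]] uq.
- move/eqP: E; rewrite primes_eq0 => lt2.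
  have : #|G : 'Z(G)| == 1%N.
    by rewrite eqn_leq -ltnS lt2 indexg_gt0.
  by rewrite indexg_eq1 (negbTE GZ).
- case/negP: nilG; rewrite -quotient_center_nil.
  apply: (@pgroup_nil _ s1); rewrite /pgroup card_quotient //.
  by rewrite /pnat indexg_gt0 E /= inE eqxx.
- have in1 : s1 \in primes #|G : 'Z(G)| by rewrite E !inE eqxx.
  have in2 : s2 \in primes #|G : 'Z(G)| by rewrite E !inE eqxx orbT.
  have [ps1 d1] := primeP _ in1; have [ps2 d2] := primeP _ in2.
  have n12 : s1 != s2 by move: uq; rewrite /= inE andbT.
  have [Y1 [S1 sY1]] := wit _ in1; have [Y2 [S2 sY2]] := wit _ in2.
  have solG : solvable G.
    rewrite (series_sol (center_normal G)) abelian_sol ?center_abelian //=.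
    by apply: integral_char.Burnside_p_a_q_b; rewrite card_quotient // E.
  have [m0 Gm0] : exists n, G^`(n) \subset 'Z(G).
    by case/derivedP: solG => n En; exists n; rewrite En sub1G.
  case: (ex_minnP (ex_intro (fun n => G^`(n) \subset 'Z(G)) m0 Gm0)) => n0 Dn0 minn0.
  have n0pos : 0 < n0.
    by rewrite lt0n; apply: contra GZ => /eqP n00; move: Dn0; rewrite n00 derg0.
  set D := (G^`(n0.-1))%G.
  have nDZ : ~~ (D \subset 'Z(G)).
    apply/negP => DZ; have := minn0 _ DZ.
    by case: (n0) n0pos => // k _; rewrite /= ltnn.
  have D1 : D^`(1) \subset 'Z(G).
    by rewrite /D derg1 -dergSn prednK.
  have nilD : nilpotent D.
    apply: small_nil_class; apply: leq_trans (_ : 2 <= 5) => //.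
    rewrite nil_class2 subsetI der_sub /=.
    apply: subset_trans D1 _; apply: subset_trans (subsetIr G 'C(G)) _.
    exact: centS (der_sub _ _).
  set L := 'F(G).
  have sDL : D \subset L := Fitting_max (der_normal _ _) nilD.
  have sZL : 'Z(G) \subset L.
    exact: Fitting_max (center_normal G) (abelian_nil (center_abelian G)).
  have nLZ : ~~ (L \subset 'Z(G)) by apply: contra nDZ; apply: subset_trans sDL.
  have nLG : L :!=: G.
    by apply: contra nilG => /eqP E'; rewrite -E'; apply: Fitting_nil.
  have nsLG : L <| G := Fitting_normal G.
  have SL : gval L \in Sig G by apply: Sig_normal.
  case/or3P: (cnum_le2 c2 SL S1 S2) => /eqP E'.
  + have sL : s1.-group L by rewrite /pgroup (orbit_card E').
    exact: (contraB c2 ntZ ps1 ps2 n12 d2 nsLG (Fitting_nil G) sZL nLZ nLG sL S2 sY2).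
  + have sL : s2.-group L by rewrite /pgroup (orbit_card E').
    rewrite eq_sym in n12.
    exact: (contraB c2 ntZ ps2 ps1 n12 d1 nsLG (Fitting_nil G) sZL nLZ nLG sL S1 sY1).
  + by move/eqP: E'; rewrite (orbit_diff S1 sY1 sY2 n12).
- have in1 : s1 \in primes #|G : 'Z(G)| by rewrite E !inE eqxx.
  have in2 : s2 \in primes #|G : 'Z(G)| by rewrite E !inE eqxx orbT.
  have in3 : s3 \in primes #|G : 'Z(G)| by rewrite E !inE eqxx !orbT.
  move: uq; rewrite /= !inE !negb_or => /and3P[/and3P[n12 n13 _] /andP[n23 _] _].
  have [Y1 [S1 sY1]] := wit _ in1; have [Y2 [S2 sY2]] := wit _ in2.
  have [Y3 [S3 sY3]] := wit _ in3.
  case/or3P: (cnum_le2 c2 S1 S2 S3) => /eqP E'; move/eqP: E'.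
  + by rewrite (orbit_diff S1 sY1 sY2 n12).
  + by rewrite (orbit_diff S1 sY1 sY3 n13).
  + by rewrite (orbit_diff S2 sY2 sY3 n23).
Qed.


Lemma caseK (gT : finGroupType) (G K : {group gT}) :
  ~~ abelian G -> 'Z(G) :!=: 1 -> cnum G <= 2 -> K <| G -> prime #|K| ->
  K :&: 'Z(G) = 1 ->
  exists (H : {group gT}) (q : nat),
    [/\ prime q, q %| (#|K|).-1, cyclic H, #|H| = (q ^ 2)%N & K * H = G] /\
    [/\ 'C_H(K) = 'Z(G), #|'Z(G)| = q & cnum G = 2].
Proof.
move=> nabG ntZ c2 nsKG pK tiKZ.
have nilG : ~~ nilpotent G by apply/negP => nilG; apply: (nil_c3 nabG nilG c2).
have sKG := normal_sub nsKG.
have abK : abelian K := cyclic_abelian (prime_cyclic pK).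
have cZK : 'Z(G) \subset 'C(K).
  by apply: subset_trans (subsetIr G 'C(G)) _; apply: centS.
have nKZ : 'Z(G) \subset 'N(K) := subset_trans cZK (cent_sub K).
have ntK : K :!=: 1.
  by apply/negP => /eqP K1; move: pK; rewrite K1 cards1.
have nKZsub : ~~ (K \subset 'Z(G)).
  by apply: contra ntK => sKZ; rewrite -tiKZ (setIidPl sKZ).
have KWE (W : {group gT}) : W \subset 'Z(G) -> (K <*> W) :&: 'Z(G) = W.
  move=> sWZ; rewrite norm_joinEr ?(subset_trans sWZ nKZ) // setIC.
  by rewrite -group_modr // setIC tiKZ mul1g.
have abKZ : abelian (K <*> 'Z(G)).
  by rewrite abelianY abK center_abelian cZK.
have KWS (W : {group gT}) : W \subset 'Z(G) ->
    (K <*> W)%G <| G /\ gval (K <*> W)%G \in Sig G.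
  move=> sWZ; have nsKW : (K <*> W)%G <| G.
    by apply: normalY nsKG (sub_center_normal sWZ).
  split=> //; apply: Sig_normal => //.
    apply: contra nabG => /eqP E; apply: abelianS abKZ.
    have sG : G \subset K <*> W by rewrite E.
    by apply: subset_trans sG _; apply: genS; apply: setUS.
  by apply: contra nKZsub; apply: subset_trans; apply: joing_subl.
have injKW (W1 W2 : {group gT}) : W1 \subset 'Z(G) -> W2 \subset 'Z(G) ->
    gval (K <*> W1)%G = gval (K <*> W2)%G -> W1 :=: W2.
  by move=> s1 s2 E; rewrite -(KWE _ s1) -(KWE _ s2) E.
have Zsub (W : {group gT}) : W \subset 'Z(G) -> W :=: 1 \/ W :=: 'Z(G).
  move=> sWZ; have [n1 S1] := KWS 1%G (sub1G _).
  have [nW SW] := KWS W sWZ; have [nZ SZ] := KWS 'Z(G)%G (subxx _).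
  case/or3P: (cnum_le2 c2 S1 SW SZ) => /eqP E.
  - by left; apply: (injKW W 1%G sWZ (sub1G _)); rewrite (orbit_normal n1 E).
  - by case/negP: ntZ; rewrite (injKW _ _ (subxx _) (sub1G _) (orbit_normal n1 E)).
  - by right; apply: (injKW W _ sWZ (subxx _)); rewrite (orbit_normal nW E).
set q := #|'Z(G)|.
have pq : prime q.
  have gt1 : 1 < q by rewrite ltnNge -trivg_card_le1.
  have [z Zz oz] := Cauchy (pdiv_prime gt1) (pdiv_dvd q).
  have : <[z]> \subset 'Z(G) by rewrite cycle_subG.
  case/Zsub => Ez.
    by move: (pdiv_prime gt1); rewrite -oz orderE Ez cards1.
  by rewrite /q -Ez -orderE oz pdiv_prime.
set KZ := (K <*> 'Z(G))%G.
have [nsKZ SKZ] := KWS 'Z(G)%G (subxx _).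
have nKG : K :!=: G.
  by apply: contra nabG => /eqP <-.
have SK : gval K \in Sig G by apply: Sig_normal.
have sZKZ : 'Z(G) \subset KZ by apply: joing_subr.
have allSig (Y : {group gT}) : gval Y \in Sig G -> Y :=: K \/ Y :=: KZ.
  move=> SY; case/or3P: (cnum_le2 c2 SY SK SKZ) => /eqP E.
  - by left; rewrite (orbit_normal nsKG (esym E)).
  - by right; rewrite (orbit_normal nsKZ (esym E)).
  - have E' := orbit_normal nsKZ (esym E).
    by case/negP: ntZ; rewrite -subG1 -tiKZ subsetI subxx andbT E' sZKZ.
set p := #|K|.
have [y defK] := cyclicP (prime_cyclic pK).
have [z defZ] := cyclicP (prime_cyclic pq).
have Ky : y \in K by rewrite defK cycle_id.
have Zz : z \in 'Z(G) by rewrite defZ cycle_id.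
have yZ : y \notin 'Z(G).
  apply/negP => yZ; case/negP: ntK; rewrite defK cycle_eq1.
  have : y \in K :&: 'Z(G) by rewrite inE Ky yZ.
  by rewrite tiKZ inE.
have pnq : p != q.
  apply/negP => /eqP Epq.
  have Gy : y \in G := subsetP sKG y Ky.
  have czy : commute y z.
    apply: esym; apply: (centP _ y Gy).
    by move: Zz; rewrite inE => /andP[].
  have oyz : #[y * z] %| p.
    have oy : #[y] = p by rewrite orderE -defK.
    have oz : #[z] = q by rewrite orderE -defZ.
    rewrite order_dvdn expgMn // -{1}oy expg_order Epq -oz expg_order.
    by rewrite mulg1.
  have yzZ : y * z \notin 'Z(G) by rewrite groupMr.
  have oyz' : #[y * z] = p.
    case/primeP: pK => _ /(_ _ oyz) /orP[/eqP o1|/eqP //].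
    by case/negP: yzZ; move/eqP: o1; rewrite order_eq1 => /eqP->; apply: group1.
  have nZY : ~~ ('Z(G) \subset <[y * z]>).
    apply/negP => sZY; case/negP: yzZ.
    have : 'Z(G) == <[y * z]> :> {set gT}.
      by rewrite eqEcard sZY -orderE oyz' Epq /q leqnn.
    by move/eqP ->; apply: cycle_id.
  have SY : gval <[y * z]>%G \in Sig G.
    apply: Sig_Zfree => //; first by rewrite cycle_subG groupM ?(subsetP sKG y Ky) ?(subsetP (center_sub G) z Zz).
    by rewrite cycle_subG.
  case: (allSig _ SY) => EY.
  - have : y * z \in K by rewrite -EY cycle_id.
    rewrite groupMl // => Kz; case/negP: ntZ; rewrite defZ cycle_eq1.
    have : z \in K :&: 'Z(G) by rewrite inE Kz Zz.
    by rewrite tiKZ inE.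
  - by case/negP: nZY; rewrite EY sZKZ.
have [Q sylQ] := Sylow_exists q G.
have /and3P[sQG qQ q'iQ] := sylQ.
have qZ : q.-group 'Z(G) by rewrite /pgroup pnat_id.
have sZQ : 'Z(G) \subset Q.
  apply: subset_trans (pcore_sub_Hall sylQ).
  exact: pcore_max qZ (center_normal G).
have pp : p.-group K by rewrite /pgroup pnat_id.
have primesG r : prime r -> r %| #|G| -> r = p \/ r = q.
  move=> pr rG; case: (eqVneq r p) => [-> | nrp]; first by left.
  case: (eqVneq r q) => [-> | nrq]; first by right.
  have [x Gx ox] := Cauchy pr rG.
  have xZ : x \notin 'Z(G).
    apply/negP => xZ; have := order_dvdG xZ; rewrite ox -/q dvdn_prime2 //.
    by rewrite (negbTE nrq).
  have nZX : ~~ ('Z(G) \subset <[x]>).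
    apply/negP => sZX; have := cardSg sZX; rewrite -orderE ox -/q dvdn_prime2 //.
    by rewrite eq_sym (negbTE nrq).
  have SX : gval <[x]>%G \in Sig G.
    by apply: Sig_Zfree; rewrite ?cycle_subG.
  case: (allSig _ SX) => EX.
  - by case/eqP: nrp; rewrite -ox orderE EX.
  - by case/negP: nZX; rewrite EX.
have [P sylP] := Sylow_exists p G.
have /and3P[sPG pP _] := sylP.
have sKP : K \subset P.
  apply: subset_trans (pcore_sub_Hall sylP).
  exact: pcore_max pp nsKG.
have PK : P :=: K.
  have nPZ : ~~ (P \subset 'Z(G)) by apply: contra nKZsub; apply: subset_trans.
  have nZP : ~~ ('Z(G) \subset P).
    apply/negP => sZP; case/eqP: pnq.
    apply: (@two_pnat #|'Z(G)|); first by rewrite ltnNge -trivg_card_le1.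
      exact: pgroupS sZP pP.
    exact: qZ.
  have SP : gval P \in Sig G by apply: Sig_Zfree.
  case: (allSig _ SP) => // EP.
  by case/negP: nZP; rewrite EP.
have Gp : partn #|G| p = p by rewrite -(card_Hall sylP) PK.
have pi_idx : p.-nat #|G : Q|.
  apply/andP; split; first exact: indexg_gt0.
  apply/allP => r; rewrite mem_primes => /and3P[pr _ rd].
  have rG : r %| #|G| := dvdn_trans rd (dvdn_indexg _ _).
  case: (primesG r pr rG) => [-> | Erq]; first by rewrite inE.
  have : r \in \pi(#|G : Q|) by rewrite mem_primes pr indexg_gt0 rd.
  by move/(pnatPpi q'iQ); rewrite inE Erq !inE eqxx.
have idx_dvd : #|G : Q| %| p.
  have := partn_dvd p (cardG_gt0 G) (dvdn_indexg G Q).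
  by rewrite (part_pnat_id pi_idx) Gp.
have idxp : #|G : Q| = p.
  case/primeP: pK => _ /(_ _ idx_dvd) /orP[/eqP i1|/eqP //].
  case/negP: nilG; apply: (@pgroup_nil _ q).
  have : G \subset Q by rewrite -indexg_eq1 i1.
  by move/pgroupS; apply.
have tiKQ : K :&: Q = 1.
  apply: coprime_TIg; apply: (@pnat_coprime q^').
    by rewrite pnatE // !inE.
  by rewrite pnatNK.
have defG : K * Q = G.
  apply/eqP; rewrite eqEcard mul_subG //= TI_cardMg // -/p -idxp mulnC.
  by rewrite Lagrange.
have abKZ' : abelian KZ := abKZ.
have nQZ : Q :!=: 'Z(G).
  apply/negP => /eqP EQ; case/negP: nabG; apply: abelianS abKZ.
  have : G \subset K * Q by rewrite defG.
  by move/subset_trans; apply; rewrite EQ mul_subG ?joing_subl ?joing_subr.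
have nQZsub : ~~ (Q \subset 'Z(G)).
  by apply: contra nQZ => sQZ; rewrite eqEsubset sQZ sZQ.
have noR (R : {group gT}) : R \proper Q -> R \subset 'Z(G).
  move=> prRQ; apply/negPn/negP => nRZ.
  have SR := Sig_nil prRQ sQG (pgroup_nil qQ) nRZ.
  have sRQ := proper_sub prRQ.
  have sKQ : K \subset Q.
    case: (allSig _ SR) => ER; rewrite ER in sRQ => //.
    exact: subset_trans (joing_subl _ _) sRQ.
  by case/negP: ntK; rewrite -subG1 -tiKQ subsetI subxx sKQ.
have [x Qx xZ] : exists2 x, x \in Q & x \notin 'Z(G) by apply/subsetPn.
have Qgen : <[x]> :=: Q.
  apply/eqP; rewrite eqEproper cycle_subG Qx /=; apply/negP => pr.
  by case/negP: xZ; rewrite -cycle_subG; apply: noR pr.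
have cycQ : cyclic Q by rewrite -Qgen cycle_cyclic.
have oQ : #|Q| = (q ^ 2)%N.
  have ox : #[x] = #|Q| by rewrite orderE Qgen.
  have gt1 : 1 < #|Q|.
    rewrite ltnNge -trivg_card_le1; apply: contra nQZsub => /eqP->.
    exact: sub1G.
  have qdv : q %| #[x].
    rewrite ox; have := pi_pdiv #|Q|; rewrite gt1 => pd.
    have := pnatPpi qQ pd; rewrite inE => /eqP <-.
    exact: pdiv_dvd.
  have oxq := orderXdiv qdv.
  have sub : <[x ^+ q]> \subset 'Z(G).
    apply: noR; rewrite properEcard (subset_trans (cycleX _ _)) ?Qgen //=.
    by rewrite -orderE oxq -ox ltn_Pdiv ?prime_gt1 ?cardG_gt0.
  have := cardSg sub; rewrite -orderE oxq -/q.
  case/primeP: pq => _ /[apply] /orP[/eqP e1|/eqP eq].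
    case/negP: nQZ; rewrite eq_sym eqEcard sZQ -/q -ox.
    by rewrite -(divnK qdv) e1 mul1n leqnn.
  by rewrite -ox -(divnK qdv) eq.
have nsCG : 'C_G(K) <| G.
  by have := subcent_normal G K; rewrite (setIidPl (normal_norm nsKG)).
have CK : 'C_G(K) = KZ :> {set gT}.
  have sZC : 'Z(G) \subset 'C_G(K) by rewrite subsetI center_sub cZK.
  have nCG : 'C_G(K) :!=: G.
    apply/negP => /eqP E; case/negP: nKZsub; rewrite subsetI sKG centsC.
    by rewrite -{1}E subsetIr.
  have nCZ : ~~ ('C_G(K) \subset 'Z(G)).
    by apply: contra nKZsub; apply: subset_trans; rewrite subsetI sKG.
  have SC : gval 'C_G(K)%G \in Sig G by apply: Sig_normal.
  case: (allSig _ SC) => // EC.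
  by case/negP: ntZ; rewrite -subG1 -tiKZ subsetI subxx andbT -EC sZC.
have CQK : 'C_Q(K) = 'Z(G).
  have -> : 'C_Q(K) = Q :&: 'C_G(K) by rewrite setIA (setIidPl sQG).
  rewrite CK /KZ /= norm_joinEr // -group_modr //.
  by rewrite setIC tiKQ mul1g.
have qdvd : q %| p.-1.
  have nQK : Q \subset 'N(K) := subset_trans sQG (normal_norm nsKG).
  have sAut : conj_aut K @* Q \subset Aut K := Aut_conj_aut K Q.
  have := cardSg (G := Aut_group K) (H := (conj_aut K @* Q)%G) sAut.
  rewrite card_morphim ker_conj_aut (setIidPr nQK) -indexgI CQK.
  rewrite card_Aut_cyclic ?prime_cyclic // totient_prime //.
  have : #|Q : 'Z(G)| = q.
    apply/eqP; rewrite -(eqn_pmul2l (prime_gt0 pq)) /q (Lagrange sZQ) oQ.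
    by rewrite -/q mulnn.
  by move->.
have cn2 : cnum G = 2.
  have ES : Sig G = [set gval K; gval KZ].
    apply/setP => Y; rewrite in_set2; apply/idP/idP => [SY|/orP[/eqP->|/eqP->]] //.
    have gY : group_set Y by move: SY; rewrite !inE => /andP[/and4P[]].
    by case: (allSig (Group gY) SY) => /= ->; rewrite eqxx ?orbT.
  rewrite /cnum ES imsetU1 imset_set1 cards2.
  suff -> : (gval K :^: G != gval KZ :^: G) by [].
  apply/eqP => E.
  have E' := orbit_normal nsKG E.
  by case/negP: ntZ; rewrite -subG1 -tiKZ subsetI subxx andbT -E' sZKZ.
exists Q, q; split; split => //.
Qed.


Lemma DnumZ0 (gT : finGroupType) (G : {group gT}) :
  prime #|'Z(G)| -> Dnum 'Z(G) = 0.
Proof.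
move=> pZ; rewrite /Dnum.
suff -> : nonselfnorm_subgroups 'Z(G) = set0 by rewrite imset0 cards0.
apply/setP => Y; rewrite inE [RHS]inE; apply/negP => /and4P[gY sYZ ntY nN].
have := cardSg (G := 'Z(G)%G) (H := Group gY) sYZ.
case/primeP: pZ => _ /[apply] /orP[/eqP e1|/eqP eZ].
  by case/negP: ntY; rewrite -[Y]/(gval (Group gY)) trivg_card1 e1.
have EY : Y = 'Z(G).
  by apply/eqP; rewrite eqEcard sYZ -[Y]/(gval (Group gY)) eZ leqnn.
by move: nN; rewrite EY (setIidPl (normG _)) eqxx.
Qed.

Unset Implicit Arguments.

Theorem mainTheorem14 (gT : finGroupType) (G : {group gT}) (n : nat) :
  ~~ abelian G -> 'Z(G) != 1 -> Dnum G = n ->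
  (exists k : nat, 4 <= k /\ Dnum 'Z(G) + k = n)
  \/
  (exists (K H : {group gT}) (p q : nat),
     [/\ prime p, prime q, q %| p.-1, K <| G & #|K| = p] /\
     [/\ cyclic H, #|H| = (q ^ 2)%N, K * H = G, 'C_H(K) = 'Z(G) & #|'Z(G)| = q] /\
     Dnum G = 3 /\ Dnum 'Z(G) = 0).
Proof.
move=> nabG ntZ Dn.
have nZG : 'Z(G) :!=: G.
  by apply: contra nabG => /eqP E; rewrite -E center_abelian.
have dec := Dnum_decomp nZG ntZ.
case: (leqP 3 (cnum G)) => [c3 | c2].
  left; exists (cnum G).+1; split; first by [].
  by rewrite -Dn dec -addnA add1n.
have {}c2 : cnum G <= 2 by [].
have [K [nsK pK tiK]] : exists K : {group gT}, [/\ K <| G, prime #|K| & K :&: 'Z(G) = 1].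
  case: (boolP (all (fun s : nat => [exists Y in Sig G, s.-group Y]) (primes #|G : 'Z(G)|)))
      => [allB | /allPn [s sP nB]].
    exfalso; apply: (caseB nabG ntZ c2) => s sP.
    case/existsP: (allP allB s sP) => Y /andP[SY sY].
    have gY : group_set Y by move: SY; rewrite !inE => /andP[/and4P[]].
    by exists (Group gY).
  have [ps _ sdv] : [/\ prime s, 0 < #|G : 'Z(G)| & s %| #|G : 'Z(G)|].
    by apply/and3P; rewrite -mem_primes.
  have [P sylP] := Sylow_exists s G.
  apply: (caseA nabG ntZ c2 ps sylP).
    apply/negP => sPZ.
    have sylPZ : s.-Sylow('Z(G)) P := pHall_subl sPZ (center_sub G) sylP.
    have := Lagrange_index (center_sub G) sPZ.
    have /and3P[_ _ s'GP] := sylP.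
    move=> E; rewrite -E in s'GP.
    have := pnat_dvd (dvdn_mulr _ (dvdnn _)) s'GP.
    by rewrite p'natE // sdv.
  move=> Y SY; apply: contra nB => sY; apply/existsP; exists Y.
  by rewrite SY.
have [H [q [[pq qd cH oH KH] [CH oZ cn]]]] := caseK nabG ntZ c2 nsK pK tiK.
have DZ : Dnum 'Z(G) = 0 by apply: DnumZ0; rewrite oZ.
right; exists K, H, #|K|, q; split; first by split.
split; first by split.
by split=> //; rewrite dec DZ cn.
Qed.
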